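(* Assume $F$ is $K$-smooth with $\ell\in\mathrm{int}(K)$ and strongly $K$-convex with $\mu\in\mathrm{int}(K)$. Let $\{x^k\}$ be generated by Algorithm 6 where, for each $k\ge1$, $e_k:=\frac{(JF(x^k)-JF(x^{k-1}))(x^k-x^{k-1})}{\|x^k-x^{k-1}\|^2}$ (and $e_0\in\mathrm{int}(K)$ arbitrary), assumed not to terminate. Then for every $k\ge1$: (i) $\mu\preceq_K e_k\preceq_K\ell$ (in particular $e_k\in\mathrm{int}(K)$); (ii) $t_k\ge\min_{c^*\in C_e}\gamma\langle c^*,e_k\rangle/\langle c^*,\ell\rangle$.
   Context: $K\subset\mathbb{R}^m$ closed convex pointed cone with nonempty interior; $y\preceq_K y'$ iff $y'-y\in K$. $K^*=\{c:\langle c,y\rangle\ge0\ \forall y\in K\}$; for $e\in\mathrm{int}(K)$, $C_e:=\{c^*\in K^*:\langle c^*,e\rangle=1\}$. $F:\mathbb{R}^n\to\mathbb{R}^m$ differentiable with Jacobian $JF$. Strongly $K$-convex with $\mu$: $JF(x)(y-x)+\tfrac12\|y-x\|^2\mu\preceq_K F(y)-F(x)$ $\forall x,y$; $K$-smooth with $\ell$: $F(y)-F(x)\preceq_K JF(x)(y-x)+\tfrac12\|y-x\|^2\ell$ $\forall x,y$. Algorithm 6: given $x^0$, $\gamma\in(0,1)$, for $k=0,1,\dots$: choose $e_k\in\mathrm{int}(K)$; $d^k:=\arg\min_d\max_{c^*\in C_e}\langle c^*,JF(x^k)d+\tfrac12\|d\|^2e_k\rangle$; if $d^k=0$ stop;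 otherwise $t_k:=\max\{\gamma^j:j\in\mathbb{N},\ F(x^k+\gamma^jd^k)-F(x^k)\preceq_K\gamma^j(JF(x^k)d^k+\tfrac12\|d^k\|^2e_k)\}$, $x^{k+1}:=x^k+t_kd^k$. *)

(* Defs.v *)
From HB Require Import structures.
From mathcomp Require Import all_boot all_order all_algebra.
From mathcomp Require Import all_classical all_reals all_analysis.
Set Implicit Arguments. Unset Strict Implicit. Unset Printing Implicit Defensive.
Import Order.TTheory GRing.Theory Num.Theory.
Import numFieldNormedType.Exports.
Local Open Scope classical_set_scope.
Local Open Scope ring_scope.

Section Defs.
Variable R : realType.

Definition dotv (p : nat) (u v : 'cV[R]_p) : R := \sum_(i < p) u i 0 * v i 0.

Definition sqnorm (p : nat) (u : 'cV[R]_p) : R := \sum_(i < p) u i 0 ^+ 2.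

Definition proper_cone (m : nat) (K : set 'cV[R]_m) : Prop :=
  [/\ closed K,
      (forall (a : R) y, 0 <= a -> K y -> K (a *: y)),
      (forall y y', K y -> K y' -> K (y + y')),
      (forall y, K y -> K (- y) -> y = 0)
    & exists y, (interior K) y].

Definition coneLe (m : nat) (K : set 'cV[R]_m) (y y' : 'cV[R]_m) : Prop :=
  K (y' - y).

Definition dual_cone (m : nat) (K : set 'cV[R]_m) : set 'cV[R]_m :=
  [set c | forall y, K y -> 0 <= dotv c y].

Definition Cset (m : nat) (K : set 'cV[R]_m) (e : 'cV[R]_m) : set 'cV[R]_m :=
  [set c | dual_cone K c /\ dotv c e = 1].

Definition strongly_K_convex (n m : nat) (K : set 'cV[R]_m)
  (F : 'cV[R]_n -> 'cV[R]_m) (JF : 'cV[R]_n -> 'M[R]_(m, n)) (mu : 'cV[R]_m) :=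
  forall x y, coneLe K (JF x *m (y - x) + (sqnorm (y - x) / 2) *: mu) (F y - F x).

Definition K_smooth (n m : nat) (K : set 'cV[R]_m)
  (F : 'cV[R]_n -> 'cV[R]_m) (JF : 'cV[R]_n -> 'M[R]_(m, n)) (l : 'cV[R]_m) :=
  forall x y, coneLe K (F y - F x) (JF x *m (y - x) + (sqnorm (y - x) / 2) *: l).

Definition dir_obj (n m : nat) (K : set 'cV[R]_m) (e : 'cV[R]_m)
  (A : 'M[R]_(m, n)) (ek : 'cV[R]_m) (d : 'cV[R]_n) : R :=
  sup [set dotv c (A *m d + (sqnorm d / 2) *: ek) | c in Cset K e].

Definition armijo (n m : nat) (K : set 'cV[R]_m)
  (F : 'cV[R]_n -> 'cV[R]_m) (JF : 'cV[R]_n -> 'M[R]_(m, n))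
  (x d : 'cV[R]_n) (ek : 'cV[R]_m) (s : R) : Prop :=
  coneLe K (F (x + s *: d) - F x) (s *: (JF x *m d + (sqnorm d / 2) *: ek)).

(* {x^k}, {d^k}, {t_k} are generated by Algorithm 6 with the choices {e_k},
   without termination *)
Definition algorithm6 (n m : nat) (K : set 'cV[R]_m) (e : 'cV[R]_m)
  (F : 'cV[R]_n -> 'cV[R]_m) (JF : 'cV[R]_n -> 'M[R]_(m, n)) (gamma : R)
  (x d : nat -> 'cV[R]_n) (t : nat -> R) (es : nat -> 'cV[R]_m) : Prop :=
  forall k : nat,
    [/\ (forall d', dir_obj K e (JF (x k)) (es k) (d k)
                    <= dir_obj K e (JF (x k)) (es k) d'),
        d k != 0,
        (exists j : nat,
            [/\ t k = gamma ^+ j,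
                armijo K F JF (x k) (d k) (es k) (gamma ^+ j)
              & forall j' : nat, armijo K F JF (x k) (d k) (es k) (gamma ^+ j') ->
                  gamma ^+ j' <= gamma ^+ j])
      & x k.+1 = x k + t k *: d k].

End Defs.

(* Main.v *)
Require Import Defs.
From HB Require Import structures.
From mathcomp Require Import all_boot all_order all_algebra.
From mathcomp Require Import all_classical all_reals all_analysis.
From mathcomp Require Import ring lra.
Import Order.TTheory GRing.Theory Num.Theory.
Import numFieldNormedType.Exports.
Local Open Scope classical_set_scope.
Local Open Scope ring_scope.
Section Aux.
Variable R : realType.

Lemma sqnorm_dotv m (u : 'cV[R]_m) : sqnorm u = dotv u u.
Proof. by apply: eq_bigr => i _; rewrite expr2. Qed.

Lemma sqnorm_ge0 m (u : 'cV[R]_m) : 0 <= sqnorm u.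
Proof. by apply: sumr_ge0 => i _; rewrite sqr_ge0. Qed.

Lemma sqnorm_gt0 m (u : 'cV[R]_m) : u != 0 -> 0 < sqnorm u.
Proof.
move=> u0; rewrite lt_neqAle sqnorm_ge0 andbT; apply/negP => /eqP /esym h.
move/negP: u0; apply; apply/eqP/matrixP => i j; rewrite ord1 mxE.
have := @psumr_eq0P _ _ _ (fun i => u i 0 ^+ 2) (fun i _ => sqr_ge0 (u i 0)) h i isT.
by move/eqP; rewrite sqrf_eq0 => /eqP.
Qed.

Lemma sqnorm_DZ m (u w : 'cV[R]_m) r :
  sqnorm (u + r *: w) = sqnorm u + 2 * r * dotv u w + r ^+ 2 * sqnorm w.
Proof.
rewrite /sqnorm /dotv !mulr_sumr -!big_split /=; apply: eq_bigr => i _.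
rewrite !mxE; ring.
Qed.

Lemma sqnormN m (u : 'cV[R]_m) : sqnorm (- u) = sqnorm u.
Proof. by apply: eq_bigr => i _; rewrite mxE sqrrN. Qed.

Lemma sqnormZ m (u : 'cV[R]_m) r : sqnorm (r *: u) = r ^+ 2 * sqnorm u.
Proof. by rewrite /sqnorm mulr_sumr; apply: eq_bigr => i _; rewrite mxE exprMn. Qed.

Lemma dotvB m (c u w : 'cV[R]_m) : dotv c (u - w) = dotv c u - dotv c w.
Proof.
rewrite /dotv -sumrB; apply: eq_bigr => i _; rewrite !mxE; ring.
Qed.

Lemma dotvZ m (c u : 'cV[R]_m) r : dotv c (r *: u) = r * dotv c u.
Proof. rewrite /dotv mulr_sumr; apply: eq_bigr => i _; rewrite !mxE; ring. Qed.

Lemma dotvZl m (c u : 'cV[R]_m) r : dotv (r *: c) u = r * dotv c u.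
Proof. rewrite /dotv mulr_sumr; apply: eq_bigr => i _; rewrite !mxE; ring. Qed.

Lemma dotvC m (c u : 'cV[R]_m) : dotv c u = dotv u c.
Proof. by apply: eq_bigr => i _; rewrite mulrC. Qed.

Lemma real_aux (a b : R) : 0 <= b ->
  (forall l : R, 0 < l -> l <= 1 -> 0 <= 2 * l * a + l ^+ 2 * b) -> 0 <= a.
Proof.
move=> b0 H; rewrite leNgt; apply/negP => a0.
set u := b - a.
have u0 : 0 < u by rewrite /u; lra.
set l := - a / u.
have lu : l * u = - a by rewrite /l mulfVK // gt_eqF.
have l0 : 0 < l by rewrite /l divr_gt0 // oppr_gt0.
have l1 : l <= 1 by rewrite /l ler_pdivrMr //; rewrite /u; lra.
have := H l l0 l1.
have e : l ^+ 2 * b = l ^+ 2 * a - l * a.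
  by rewrite expr2 -mulrA -[in LHS](subrK a b) mulrDr lu /u; ring.
rewrite e => h.
have h1 : l * a < 0 by rewrite pmulr_rlt0.
have h2 : l ^+ 2 * a < 0 by rewrite pmulr_rlt0 // exprn_gt0.
lra.
Qed.

Lemma trmx_cont m : continuous (fun w : 'rV[R]_m => w^T).
Proof.
move=> w A /= /nbhs_ballP [e e0 he]; apply/nbhs_ballP; exists e => // v [_ hv].
apply: he; split => // i j; rewrite !mxE; exact: hv.
Qed.

Lemma separation m (K : set 'cV[R]_m) (z : 'cV[R]_m) : closed K ->
  (forall (a : R) y, 0 <= a -> K y -> K (a *: y)) ->
  (forall y y', K y -> K y' -> K (y + y')) -> K 0 -> ~ K z ->
  exists c, (forall y, K y -> 0 <= dotv c y) /\ dotv c z < 0.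
Proof.
move=> Kcl Ksc Kad K0 nKz.
set s0 := sqnorm z.
have s00 : 0 <= s0 by exact: sqnorm_ge0.
pose g := fun w : 'rV[R]_m => sqnorm (w^T - z).
pose A := [set w : 'rV[R]_m | K w^T /\ g w <= s0].
have gE : g = fun w => \sum_(i < m) (w ord0 i - z i 0) ^+ 2.
  by apply: funext => w; apply: eq_bigr => i _; rewrite !mxE.
have gc : continuous g.
  rewrite gE; apply: continuous_big => [|i _]; first exact: add_continuous.
  move=> w; apply: (@continuous_comp _ _ _ (fun w : 'rV[R]_m => w ord0 i - z i 0) (fun r : R => r ^+ 2)).
    exact: (cvgB (@coord_continuous _ 1 m ord0 i w) (cvg_cst _)).
  exact: exprn_continuous.
have Acl : closed A.
  apply: closedI; first by apply: preimage_closed Kcl => w _; exact: trmx_cont.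
  by apply: preimage_closed (@closed_le R s0) => w _; exact: gc.
pose B := [set v : 'rV[R]_m | forall i, `[z i 0 - (1 + s0), z i 0 + (1 + s0)]%classic (v ord0 i)].
have AB : A `<=` B.
  move=> w [_ hw] i.
  have hi : (w ord0 i - z i 0) ^+ 2 <= s0.
    rewrite gE in hw; apply: le_trans hw; rewrite (bigD1 i) //= lerDl.
    by apply: sumr_ge0 => j _; exact: sqr_ge0.
  rewrite /= in_itv /=; apply/andP; split; nra.
have Bc : compact B by apply: (@rV_compact _ _ (fun i => `[z i 0 - (1 + s0), z i 0 + (1 + s0)]%classic)) => i; exact: segment_compact.
have Acp := subclosed_compact Acl Bc AB.
have A0 : A !=set0.
  exists 0; split; rewrite /= ?trmx0 //.
  by rewrite /g trmx0 sub0r sqnormN.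
have [w0 w0A hmin] := compact_EVT_min A0 Acp (continuous_subspaceT gc).
move: (w0A); rewrite inE => -[Kp gp].
set p := w0^T in Kp gp.
have hp : forall y, K y -> sqnorm (p - z) <= sqnorm (y - z).
  move=> y Ky; case: (leP (sqnorm (y - z)) s0) => hy.
    have : y^T \in A by rewrite inE; split; rewrite /g trmxK.
    by move/hmin; rewrite /g trmxK.
  exact: le_trans gp (ltW hy).
set c := p - z.
have key : forall y, K (p + y) -> sqnorm c <= sqnorm (c + y).
  by move=> y /hp; rewrite addrAC.
exists c; split.
  move=> y Ky; apply: (real_aux _ _ (sqnorm_ge0 _ y)) => l l0 l1.
  have := key (l *: y) (Kad _ _ Kp (Ksc _ _ (ltW l0) Ky)).
  rewrite sqnorm_DZ; lra.
have hcp : 0 <= - dotv c p.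
  apply: (real_aux _ _ (sqnorm_ge0 _ p)) => l l0 l1.
  have Kl : K (p + (- l) *: p).
    by rewrite scaleNr -{1}(scale1r p) -scalerBl; apply: Ksc => //; lra.
  have := key _ Kl; rewrite sqnorm_DZ sqrrN; lra.
have cn0 : c != 0.
  apply/negP => /eqP c0; apply: nKz; move: c0; rewrite /c => /eqP.
  by rewrite subr_eq0 => /eqP <-.
have := sqnorm_gt0 _ _ cn0; rewrite sqnorm_dotv.
have -> : z = p - c by rewrite /c opprB addrCA subrr addr0.
rewrite dotvB; lra.
Qed.

Lemma int_add m (K : set 'cV[R]_m) a b :
  (forall y y', K y -> K y' -> K (y + y')) ->
  interior K a -> K b -> interior K (a + b).
Proof.
move=> Kad /nbhs_ballP [e e0 he] Kb; apply/nbhs_ballP; exists e => // v [_ hv].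
have -> : v = (v - b) + b by rewrite subrK.
apply: Kad (he _ _) Kb; split => // i j; move: (hv i j).
rewrite -!ball_normE /= !mxE.
by have -> : a i j - (v i j - b i j) = a i j + b i j - v i j by ring.
Qed.

Lemma pos_int m (K : set 'cV[R]_m) e c :
  interior K e -> dual_cone K c -> c != 0 -> 0 < dotv c e.
Proof.
move=> /nbhs_ballP [eps eps0 he] Kc cn0.
have nc : 0 < `|c| by rewrite normr_gt0.
set del := eps / (2 * `|c|).
have del0 : 0 < del by rewrite /del divr_gt0 // mulr_gt0.
have hw : K (e - del *: c).
  apply: he; rewrite -ball_normE /= opprB addrCA subrr addr0 normrZ gtr0_norm //.
  have -> : del * `|c| = eps / 2 by rewrite /del; field; rewrite gt_eqF.
  by rewrite ltr_pdivrMr // mulr_natr mulr2n ltrDr.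
have := Kc _ hw; rewrite dotvB dotvZ -sqnorm_dotv => h.
have := sqnorm_gt0 _ _ cn0 => h2.
have := mulr_gt0 del0 h2; lra.
Qed.

Lemma cvx_comb m (a b P Q u : 'cV[R]_m) (r : R) :
  (a - b - (Q + (r / 2) *: u)) + (b - a - (- P + (r / 2) *: u)) = (P - Q) - r *: u.
Proof. by apply/matrixP => i j; rewrite !mxE; field. Qed.

Lemma smo_comb m (a b P Q u : 'cV[R]_m) (r : R) :
  (Q + (r / 2) *: u - (a - b)) + (- P + (r / 2) *: u - (b - a)) = r *: u - (P - Q).
Proof. by apply/matrixP => i j; rewrite !mxE; field. Qed.

Lemma arm_comb m (A E L D : 'cV[R]_m) (sg q : R) :
  (sg *: A + (sg ^+ 2 * q / 2) *: L - D) + (sg * q / 2) *: (E - sg *: L)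
  = sg *: (A + (q / 2) *: E) - D.
Proof. by apply/matrixP => i j; rewrite !mxE; field. Qed.

End Aux.

Theorem mainTheorem15 (R : realType) (n m : nat) (K : set 'cV[R]_m)
  (F : 'cV[R]_n -> 'cV[R]_m) (JF : 'cV[R]_n -> 'M[R]_(m, n))
  (mu l e : 'cV[R]_m) (gamma : R)
  (x d : nat -> 'cV[R]_n) (t : nat -> R) (es : nat -> 'cV[R]_m) :
  proper_cone K ->
  (forall z, differentiable F z /\ forall v, 'd F z v = JF z *m v) ->
  (interior K) l -> K_smooth K F JF l ->
  (interior K) mu -> strongly_K_convex K F JF mu ->
  (interior K) e ->
  0 < gamma < 1 ->
  (interior K) (es 0%N) ->
  (forall k : nat, (1 <= k)%N ->
     es k = (sqnorm (x k - x k.-1))^-1 *: ((JF (x k) - JF (x k.-1)) *m (x k - x k.-1))) ->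
  algorithm6 K e F JF gamma x d t es ->
  forall k : nat, (1 <= k)%N ->
    [/\ coneLe K mu (es k), coneLe K (es k) l, (interior K) (es k)
      & inf [set gamma * dotv c (es k) / dotv c l | c in Cset K e] <= t k].
Proof.
move=> [Kcl Ksc Kad Kpt [y0 y0i]] _ hl hsm hmu hcv he hg _ hes halg k k1.
have intK : forall a, interior K a -> K a by move=> a; exact: interior_subset.
have K0 : K 0 by rewrite -(scale0r y0); apply: Ksc (intK _ y0i).
case/andP: hg => g0 g1.
case: k k1 => // k' _.
have tpos : forall i, 0 < t i.
  by move=> i; case: (halg i) => _ _ [j [-> _ _]] _; rewrite exprn_gt0.
case: (halg k') => _ dn0 _ xk.
set v := x k'.+1 - x k'.
have vE : v = t k' *: d k' by rewrite /v xk addrAC subrr add0r.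
have vn0 : v != 0 by rewrite vE scaler_eq0 negb_or gt_eqF ?tpos.
set s := sqnorm v.
have s0 : 0 < s by exact: sqnorm_gt0.
have esk : es k'.+1 = s^-1 *: ((JF (x k'.+1) - JF (x k')) *m v) by rewrite hes.
have e1 : x k' - x k'.+1 = - v by rewrite opprB.
have hmuD : K (((JF (x k'.+1) - JF (x k')) *m v) - s *: mu).
  have := Kad _ _ (hcv (x k') (x k'.+1)) (hcv (x k'.+1) (x k')).
  by rewrite /coneLe -/v e1 sqnormN mulmxN -/s cvx_comb -mulmxBl.
have hlD : K (s *: l - ((JF (x k'.+1) - JF (x k')) *m v)).
  have := Kad _ _ (hsm (x k') (x k'.+1)) (hsm (x k'.+1) (x k')).
  by rewrite /coneLe -/v e1 sqnormN mulmxN -/s smo_comb -mulmxBl.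
have sinv : 0 <= s^-1 by rewrite invr_ge0 ltW.
have hA : K (es k'.+1 - mu).
  have := Ksc _ _ sinv hmuD.
  by rewrite scalerBr scalerA mulVf ?gt_eqF // scale1r -esk.
have hB : K (l - es k'.+1).
  have := Ksc _ _ sinv hlD.
  by rewrite scalerBr scalerA mulVf ?gt_eqF // scale1r -esk.
have hI : interior K (es k'.+1).
  by rewrite -(subrK mu (es k'.+1)) addrC; apply: int_add.
have esK : K (es k'.+1) by exact: intK.
split => //.
set S := [set gamma * dotv c (es k'.+1) / dotv c l | c in Cset K e].
have Slb : has_lbound S.
  exists 0 => _ [c [Kc _] <-].
  by apply: divr_ge0; [apply: mulr_ge0; [exact: ltW | exact: Kc]| exact: Kc (intK _ hl)].
case: (pselect (exists c, Cset K e c)) => [[c0 hc0] | nC]; last first.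
  have -> : S = set0.
    by rewrite -subset0 => y [c hc _]; apply: nC; exists c.
  by rewrite inf0 ltW.
suff [c hc hle] : exists2 c, Cset K e c & gamma * dotv c (es k'.+1) / dotv c l <= t k'.+1.
  apply: le_trans hle; apply: ge_inf => //; by exists c.
case: (halg k'.+1) => _ dn1 [j [tj harm hmax]] _.
case: j tj harm hmax => [|j'] tj harm hmax.
  exists c0 => //; rewrite tj expr0.
  case: hc0 => Kc _.
  have a0 := Kc _ esK; have b0 := Kc _ (intK _ hl).
  have := Kc _ hB; rewrite dotvB => hab.
  have q1 : dotv c0 (es k'.+1) / dotv c0 l <= 1.
    case: (eqVneq (dotv c0 l) 0) => [->|bn0]; first by rewrite invr0 mulr0.
    by rewrite ler_pdivrMr ?mul1r ?lt_neqAle 1?eq_sym ?bn0 //; lra.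
  have q0 : 0 <= dotv c0 (es k'.+1) / dotv c0 l by exact: divr_ge0.
  rewrite -mulrA; nra.
set sg := gamma ^+ j'.
have sg0 : 0 < sg by rewrite exprn_gt0.
have nA : ~ armijo K F JF (x k'.+1) (d k'.+1) (es k'.+1) sg.
  move=> /hmax; rewrite exprS -/sg; nra.
have nz : ~ K (es k'.+1 - sg *: l).
  move=> hK; apply: nA.
  set q := sqnorm (d k'.+1).
  have q0 : 0 <= q by exact: sqnorm_ge0.
  have h1 := hsm (x k'.+1) (x k'.+1 + sg *: d k'.+1).
  have ee : x k'.+1 + sg *: d k'.+1 - x k'.+1 = sg *: d k'.+1 by rewrite addrAC subrr add0r.
  rewrite /coneLe ee sqnormZ -scalemxAr -/q in h1.
  have h2 : K ((sg * q / 2) *: (es k'.+1 - sg *: l)).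
    by apply: Ksc => //; apply: divr_ge0 => //; apply: mulr_ge0 => //; exact: ltW.
  have := Kad _ _ h1 h2; rewrite arm_comb; exact.
have [c [Kc hcz]] := separation _ _ _ _ Kcl Ksc Kad K0 nz.
have cn0 : c != 0.
  apply/negP => /eqP cz; move: hcz; rewrite cz /dotv big1 ?ltxx // => i _.
  by rewrite mxE mul0r.
have ce := pos_int _ _ _ _ _ he Kc cn0.
have cl := pos_int _ _ _ _ _ hl Kc cn0.
set al := (dotv c e)^-1.
have al0 : 0 < al by rewrite invr_gt0.
exists (al *: c).
  split; last by rewrite dotvZl mulVf ?gt_eqF.
  by move=> y Ky; rewrite dotvZl mulr_ge0 ?Kc // ltW.
rewrite !dotvZl.
rewrite -mulrA.
have -> : al * dotv c (es k'.+1) / (al * dotv c l) = dotv c (es k'.+1) / dotv c l.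
  by rewrite invfM mulrACA mulfV ?gt_eqF // mul1r.
move: hcz; rewrite dotvB dotvZ => hcz.
have hq : dotv c (es k'.+1) / dotv c l <= sg.
  rewrite ler_pdivrMr //; lra.
rewrite tj exprS -/sg; apply: ler_wpM2l => //; exact: ltW.
Qed.
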